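(* Let $R\subseteq\mathbb{R}^2$ be open and let $f:R\to\mathbb{R}^2$ be a $C^1$ mapping such that its critical set $S$ is nowhere dense. Suppose that $C(f)$ has non-empty interior. Then the points $w$ with $\mathrm{Val}(f,w)=\infty$ are dense in the interior of $C(f)$.
   Context: Write $f=(u,v)$; $J_f=u_xv_y-u_yv_x$ and $S=\{z\in R: J_f(z)=0\}$. $C(f)$ is the set of finite points $\zeta\in\mathbb{R}^2$ for which there is a sequence $(z_n)\subset R$ converging to a point of $\partial R$ or with $|z_n|\to\infty$, such that $f(z_n)\to\zeta$. $\mathrm{Val}(f,w)$ is the number (possibly infinite) of distinct $z\in R$ with $f(z)=w$. *)

(* Defs.v *)
From Stdlib Require Import Reals List.
From Coquelicot Require Import Coquelicot.
Open Scope R_scope.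

Definition pt := (R * R)%type.

Definition edist (p q : pt) : R :=
  sqrt ((fst p - fst q) ^ 2 + (snd p - snd q) ^ 2).

Definition enorm (p : pt) : R := sqrt (fst p ^ 2 + snd p ^ 2).

Definition eball (p : pt) (r : R) (q : pt) : Prop := edist p q < r.

Definition is_open (A : pt -> Prop) : Prop :=
  forall p, A p -> exists r, 0 < r /\ forall q, eball p r q -> A q.

Definition interior2 (A : pt -> Prop) (p : pt) : Prop :=
  exists r, 0 < r /\ forall q, eball p r q -> A q.

Definition closure2 (A : pt -> Prop) (p : pt) : Prop :=
  forall r, 0 < r -> exists q, A q /\ eball p r q.

Definition boundary (A : pt -> Prop) (p : pt) : Prop :=
  closure2 A p /\ ~ interior2 A p.

Definition nowhere_dense (A : pt -> Prop) : Prop :=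
  forall p, ~ interior2 (closure2 A) p.

Definition seq_cv (z : nat -> pt) (l : pt) : Prop :=
  forall eps, 0 < eps -> exists N, forall n, (N <= n)%nat -> edist (z n) l < eps.

Definition seq_to_infty (z : nat -> pt) : Prop :=
  forall M, exists N, forall n, (N <= n)%nat -> M < enorm (z n).

Definition dx (u : R -> R -> R) (x y : R) : R := Derive (fun t => u t y) x.
Definition dy (u : R -> R -> R) (x y : R) : R := Derive (fun t => u x t) y.

Definition C1_on (D : pt -> Prop) (u : R -> R -> R) : Prop :=
  forall x y, D (x, y) ->
    differentiable_pt_lim u x y (dx u x y) (dy u x y) /\
    continuity_2d_pt (dx u) x y /\ continuity_2d_pt (dy u) x y.

Definition jac (u v : R -> R -> R) (p : pt) : R :=
  dx u (fst p) (snd p) * dy v (fst p) (snd p)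
  - dy u (fst p) (snd p) * dx v (fst p) (snd p).

Definition fmap (u v : R -> R -> R) (p : pt) : pt := (u (fst p) (snd p), v (fst p) (snd p)).

Definition crit (D : pt -> Prop) (u v : R -> R -> R) (z : pt) : Prop :=
  D z /\ jac u v z = 0.

Definition cluster_set (D : pt -> Prop) (u v : R -> R -> R) (w : pt) : Prop :=
  exists z : nat -> pt,
    (forall n, D (z n)) /\
    ((exists b, boundary D b /\ seq_cv z b) \/ seq_to_infty z) /\
    seq_cv (fun n => fmap u v (z n)) w.

(* Val(f,w) = infinity: infinitely many distinct z in D with f z = w *)
Definition val_infinite (D : pt -> Prop) (u v : R -> R -> R) (w : pt) : Prop :=
  ~ exists l : list pt, forall z, D z -> fmap u v z = w -> In z l.

(* Main.v *)
Require Import Defs.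
From Stdlib Require Import Reals List.
From Coquelicot Require Import Coquelicot.
From Stdlib Require Import Lra Lia Psatz Classical ClassicalEpsilon.
Open Scope R_scope.

Lemma edist_ge0 p q : 0 <= edist p q.
Proof. unfold edist; apply sqrt_pos. Qed.

Lemma edist_sym p q : edist p q = edist q p.
Proof. unfold edist; f_equal; ring. Qed.

Lemma edist_refl p : edist p p = 0.
Proof. unfold edist. replace ((fst p - fst p) ^ 2 + (snd p - snd p) ^ 2) with 0 by ring. apply sqrt_0. Qed.

Lemma edist_fst p q : Rabs (fst p - fst q) <= edist p q.
Proof.
  unfold edist. rewrite <- sqrt_Rsqr_abs. apply sqrt_le_1_alt.
  unfold Rsqr. generalize (pow2_ge_0 (snd p - snd q)); intro; simpl; nra.
Qed.

Lemma edist_snd p q : Rabs (snd p - snd q) <= edist p q.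
Proof.
  unfold edist. rewrite <- sqrt_Rsqr_abs. apply sqrt_le_1_alt.
  unfold Rsqr. generalize (pow2_ge_0 (fst p - fst q)); intro; simpl; nra.
Qed.

Lemma edist_le_sum p q : edist p q <= Rabs (fst p - fst q) + Rabs (snd p - snd q).
Proof.
  unfold edist.
  set (a := fst p - fst q); set (b := snd p - snd q).
  rewrite <- (sqrt_Rsqr (Rabs a + Rabs b)).
  2:{ generalize (Rabs_pos a) (Rabs_pos b); lra. }
  apply sqrt_le_1_alt. unfold Rsqr.
  generalize (Rabs_pos a) (Rabs_pos b); intros.
  replace (a ^ 2) with (Rabs a * Rabs a).
  2:{ rewrite <- Rabs_mult. rewrite Rabs_right; [ring|nra]. }
  replace (b ^ 2) with (Rabs b * Rabs b).
  2:{ rewrite <- Rabs_mult. rewrite Rabs_right; [ring|nra]. }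
  nra.
Qed.

Lemma edist_triangle p q r : edist p q <= edist p r + edist r q.
Proof.
  unfold edist.
  set (a1 := fst p - fst r); set (a2 := snd p - snd r).
  set (b1 := fst r - fst q); set (b2 := snd r - snd q).
  replace (fst p - fst q) with (a1 + b1) by (unfold a1, b1; ring).
  replace (snd p - snd q) with (a2 + b2) by (unfold a2, b2; ring).
  generalize (sqrt_cauchy a1 a2 b1 b2); intro Hc.
  set (A := sqrt (a1 ^ 2 + a2 ^ 2)); set (B := sqrt (b1 ^ 2 + b2 ^ 2)).
  assert (HA : A * A = a1 ^ 2 + a2 ^ 2) by (apply sqrt_sqrt; nra).
  assert (HB : B * B = b1 ^ 2 + b2 ^ 2) by (apply sqrt_sqrt; nra).
  assert (HA0 : 0 <= A) by apply sqrt_pos.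
  assert (HB0 : 0 <= B) by apply sqrt_pos.
  unfold Rsqr in Hc. fold A B in Hc.
  replace (a1 * a1 + a2 * a2) with (a1 ^ 2 + a2 ^ 2) in Hc by ring.
  replace (b1 * b1 + b2 * b2) with (b1 ^ 2 + b2 ^ 2) in Hc by ring.
  fold A B in Hc.
  rewrite <- (sqrt_Rsqr (A + B)) by lra.
  apply sqrt_le_1_alt. unfold Rsqr. nra.
Qed.

Lemma edist_eq0 p q : edist p q = 0 -> p = q.
Proof.
  intro H. destruct p as [p1 p2], q as [q1 q2].
  generalize (edist_fst (p1,p2) (q1,q2)) (edist_snd (p1,p2) (q1,q2)).
  rewrite H; simpl; intros H1 H2.
  generalize (Rabs_pos (p1 - q1)) (Rabs_pos (p2 - q2)); intros.
  assert (E1: Rabs (p1 - q1) = 0) by lra. assert (E2: Rabs (p2 - q2) = 0) by lra.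
  apply Rabs_eq_0 in E1; apply Rabs_eq_0 in E2.
  f_equal; lra.
Qed.

Lemma enorm_edist p : enorm p = edist p (0,0).
Proof. unfold enorm, edist; simpl; f_equal; ring. Qed.

Lemma r_mono (r : nat -> R) : (forall n, 0 <= r n) -> (forall n, r (S n) <= r n / 4) ->
  forall n m, (n <= m)%nat -> r m <= r n.
Proof.
  intros H0 H1 n m Hnm. induction Hnm. lra.
  specialize (H1 m). specialize (H0 m). lra.
Qed.

Lemma r_small (r : nat -> R) : (forall n, 0 <= r n) -> (forall n, r (S n) <= r n / 4) ->
  forall e, 0 < e -> exists n, r n < e.
Proof.
  intros H0 H1 e He.
  assert (Hk : forall n, r n * (INR n + 1) <= r 0%nat).
  { induction n. simpl; lra. rewrite S_INR.
    specialize (H1 n). specialize (H0 (S n)). generalize (pos_INR n). intro. nra. }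
  destruct (INR_archimed e (r 0%nat) He) as [n Hn]. exists n.
  destruct (Rlt_or_le (r n) e) as [h|h]; auto.
  specialize (Hk n). generalize (pos_INR n). intro. nra.
Qed.

Lemma geom_limit (z : nat -> pt) (r : nat -> R) :
  (forall n, 0 <= r n) -> (forall n, r (S n) <= r n / 4) ->
  (forall n, edist (z n) (z (S n)) <= r n / 2) ->
  exists l, forall n, edist (z n) l <= 2/3 * r n.
Proof.
  intros H0 H1 H2.
  assert (Hm : forall m k, edist (z k) (z (m + k)%nat) <= 2/3 * r k).
  { induction m; intro k. simpl. rewrite edist_refl. specialize (H0 k); lra.
    replace (S m + k)%nat with (m + S k)%nat by lia.
    eapply Rle_trans. apply (edist_triangle (z k) (z (m + S k)%nat) (z (S k))).
    specialize (IHm (S k)). specialize (H2 k). specialize (H1 k). lra. }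
  assert (Hnm : forall n m, (n <= m)%nat -> edist (z n) (z m) <= 2/3 * r n).
  { intros n m h. replace m with ((m - n) + n)%nat by lia. apply Hm. }
  assert (Hc : forall (proj : pt -> R), (forall p q, Rabs (proj p - proj q) <= edist p q) ->
            Cauchy_crit (fun n => proj (z n))).
  { intros proj Hp eps Heps.
    destruct (r_small r H0 H1 eps Heps) as [N HN]. exists N.
    intros n m hn hm. unfold Rdist.
    destruct (Nat.le_ge_cases n m) as [h|h].
    - eapply Rle_lt_trans. apply Hp. eapply Rle_lt_trans. apply Hnm; auto.
      generalize (r_mono r H0 H1 N n hn); intro; specialize (H0 n); lra.
    - rewrite Rabs_minus_sym.
      eapply Rle_lt_trans. apply Hp. eapply Rle_lt_trans. apply Hnm; auto.
      generalize (r_mono r H0 H1 N m hm); intro; specialize (H0 m); lra. }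
  destruct (Rcomplete.R_complete _ (Hc fst edist_fst)) as [l1 Hl1].
  destruct (Rcomplete.R_complete _ (Hc snd edist_snd)) as [l2 Hl2].
  exists (l1, l2). intro n.
  destruct (Rle_or_lt (edist (z n) (l1, l2)) (2/3 * r n)) as [h|h]; auto.
  exfalso. set (g := edist (z n) (l1, l2) - 2/3 * r n).
  assert (Hg : g / 2 > 0) by (unfold g; lra).
  destruct (Hl1 _ Hg) as [N1 HN1]. destruct (Hl2 _ Hg) as [N2 HN2].
  set (m := (N1 + N2 + n)%nat).
  specialize (HN1 m ltac:(unfold m; lia)). specialize (HN2 m ltac:(unfold m; lia)).
  unfold Rdist in HN1, HN2.
  generalize (edist_le_sum (z m) (l1, l2)); simpl; intro Hs.
  generalize (Hnm n m ltac:(unfold m; lia)); intro.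
  generalize (edist_triangle (z n) (l1, l2) (z m)); intro.
  unfold g in *. lra.
Qed.

Lemma partial_x u x y lx ly : differentiable_pt_lim u x y lx ly ->
  derivable_pt_lim (fun t => u t y) x lx.
Proof.
  intro H.
  generalize (derivable_pt_lim_comp_2d u id (fct_cte y) x lx ly 1 0 H
    (derivable_pt_lim_id x) (derivable_pt_lim_const y x)).
  unfold id, fct_cte. replace (lx * 1 + ly * 0) with lx by ring. auto.
Qed.

Lemma partial_y u x y lx ly : differentiable_pt_lim u x y lx ly ->
  derivable_pt_lim (fun t => u x t) y ly.
Proof.
  intro H.
  generalize (derivable_pt_lim_comp_2d u (fct_cte x) id y lx ly 0 1 H
    (derivable_pt_lim_const x y) (derivable_pt_lim_id y)).
  unfold id, fct_cte. replace (lx * 0 + ly * 1) with ly by ring. auto.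
Qed.

Lemma mvt_seg (f f' : R -> R) a b :
  (forall c, Rmin a b <= c <= Rmax a b -> derivable_pt_lim f c (f' c)) ->
  exists c, Rmin a b <= c <= Rmax a b /\ f b - f a = f' c * (b - a).
Proof.
  intro H. destruct (Rtotal_order a b) as [h|[h|h]].
  - destruct (MVT_cor2 f f' a b h) as [c [Hc1 Hc2]].
    { intros c hc. apply H. rewrite Rmin_left, Rmax_right; lra. }
    exists c. rewrite Rmin_left, Rmax_right by lra. split; [lra|auto].
  - subst. exists b. rewrite Rmin_left, Rmax_left by lra. split; [lra|ring].
  - destruct (MVT_cor2 f f' b a h) as [c [Hc1 Hc2]].
    { intros c hc. apply H. rewrite Rmin_right, Rmax_left; lra. }
    exists c. rewrite Rmin_right, Rmax_left by lra. split; [lra|]. lra.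
Qed.

Lemma between_box a b c q rho : Rmin a b <= c <= Rmax a b ->
  Rabs (a - q) <= rho -> Rabs (b - q) <= rho -> Rabs (c - q) <= rho.
Proof.
  intros [h1 h2] ha hb. apply Rabs_le_between' in ha. apply Rabs_le_between' in hb.
  apply Rabs_le_between'.
  unfold Rmin, Rmax in *. destruct (Rle_dec a b); lra.
Qed.

Lemma diff_cont f x y lx ly : differentiable_pt_lim f x y lx ly ->
  forall e, 0 < e -> exists d, 0 < d /\ forall s t, Rabs (s - x) < d -> Rabs (t - y) < d ->
    Rabs (f s t - f x y) < e.
Proof.
  intros H e He. destruct (H (mkposreal 1 Rlt_0_1)) as [d0 Hd0]. simpl in Hd0.
  set (K := Rabs lx + Rabs ly + 1).
  assert (HK : 0 < K) by (unfold K; generalize (Rabs_pos lx) (Rabs_pos ly); lra).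
  exists (Rmin d0 (e / (2 * K))). split.
  { apply Rmin_glb_lt. apply cond_pos. apply Rdiv_lt_0_compat; lra. }
  intros s t hs ht.
  assert (hs0 : Rabs (s - x) < d0) by (eapply Rlt_le_trans; [apply hs|apply Rmin_l]).
  assert (ht0 : Rabs (t - y) < d0) by (eapply Rlt_le_trans; [apply ht|apply Rmin_l]).
  assert (hs1 : Rabs (s - x) < e / (2 * K)) by (eapply Rlt_le_trans; [apply hs|apply Rmin_r]).
  assert (ht1 : Rabs (t - y) < e / (2 * K)) by (eapply Rlt_le_trans; [apply ht|apply Rmin_r]).
  specialize (Hd0 s t hs0 ht0).
  set (m := Rmax (Rabs (s - x)) (Rabs (t - y))) in *.
  assert (hm : m < e / (2 * K)) by (unfold m; apply Rmax_lub_lt; auto).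
  assert (hm0 : Rabs (s - x) <= m /\ Rabs (t - y) <= m) by (unfold m; split; [apply Rmax_l|apply Rmax_r]).
  assert (Hl : Rabs (lx * (s - x) + ly * (t - y)) <= (Rabs lx + Rabs ly) * m).
  { eapply Rle_trans. apply Rabs_triang. rewrite !Rabs_mult.
    generalize (Rabs_pos lx) (Rabs_pos ly); intros; nra. }
  replace (f s t - f x y) with ((f s t - f x y - (lx * (s - x) + ly * (t - y))) + (lx * (s - x) + ly * (t - y))) by ring.
  eapply Rle_lt_trans. apply Rabs_triang.
  assert (K * m < e / 2).
  { replace (e / 2) with (K * (e / (2 * K))) by (field; lra). apply Rmult_lt_compat_l; lra. }
  unfold K in *. lra.
Qed.

Lemma term_bound p e D k : Rabs e <= k -> Rabs (p * e * D) <= Rabs p * k * Rabs D.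
Proof.
  intro h. rewrite !Rabs_mult. apply Rmult_le_compat_r. apply Rabs_pos.
  apply Rmult_le_compat_l. apply Rabs_pos. auto.
Qed.

Lemma contr_alg a b c d e1 e2 e3 e4 D1 D2 k :
  a * d - b * c <> 0 ->
  Rabs e1 <= k -> Rabs e2 <= k -> Rabs e3 <= k -> Rabs e4 <= k ->
  k * (16 * (Rabs a + Rabs b + Rabs c + Rabs d + 1)) <= Rabs (a * d - b * c) ->
  Rabs (D1 - (d * ((a + e1) * D1 + (b + e2) * D2) - b * ((c + e3) * D1 + (d + e4) * D2)) / (a * d - b * c))
  + Rabs (D2 - (- c * ((a + e1) * D1 + (b + e2) * D2) + a * ((c + e3) * D1 + (d + e4) * D2)) / (a * d - b * c))
  <= / 8 * (Rabs D1 + Rabs D2).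
Proof.
  intros Hdet h1 h2 h3 h4 hk.
  set (det := a * d - b * c) in *.
  replace (D1 - (d * ((a + e1) * D1 + (b + e2) * D2) - b * ((c + e3) * D1 + (d + e4) * D2)) / det)
    with (- (d * e1 * D1 + (- b) * e3 * D1 + d * e2 * D2 + (- b) * e4 * D2) / det)
    by (unfold det in *; field; auto).
  replace (D2 - (- c * ((a + e1) * D1 + (b + e2) * D2) + a * ((c + e3) * D1 + (d + e4) * D2)) / det)
    with (- ((- c) * e1 * D1 + a * e3 * D1 + (- c) * e2 * D2 + a * e4 * D2) / det)
    by (unfold det in *; field; auto).
  assert (Hdp : 0 < Rabs det) by (apply Rabs_pos_lt; auto).
  unfold Rdiv. rewrite !Rabs_mult, !Rabs_Ropp, Rabs_inv.
  assert (T1 : forall p1 p2 p3 p4 f1 f2 f3 f4, Rabs f1 <= k -> Rabs f2 <= k -> Rabs f3 <= k -> Rabs f4 <= k ->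
     Rabs (p1 * f1 * D1 + p2 * f2 * D1 + p3 * f3 * D2 + p4 * f4 * D2) <=
     Rabs p1 * k * Rabs D1 + Rabs p2 * k * Rabs D1 + Rabs p3 * k * Rabs D2 + Rabs p4 * k * Rabs D2).
  { intros. eapply Rle_trans. apply Rabs_triang.
    apply Rplus_le_compat; [|apply term_bound; auto].
    eapply Rle_trans. apply Rabs_triang.
    apply Rplus_le_compat; [|apply term_bound; auto].
    eapply Rle_trans. apply Rabs_triang.
    apply Rplus_le_compat; apply term_bound; auto. }
  generalize (T1 d (-b) d (-b) e1 e3 e2 e4 h1 h3 h2 h4).
  generalize (T1 (-c) a (-c) a e1 e3 e2 e4 h1 h3 h2 h4).
  rewrite !Rabs_Ropp. intros HB HA.
  set (X := Rabs (d * e1 * D1 + - b * e3 * D1 + d * e2 * D2 + - b * e4 * D2)) in *.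
  set (Y := Rabs (- c * e1 * D1 + a * e3 * D1 + - c * e2 * D2 + a * e4 * D2)) in *.
  assert (Hk0 : 0 <= k) by (generalize (Rabs_pos e1); lra).
  generalize (Rabs_pos a) (Rabs_pos b) (Rabs_pos c) (Rabs_pos d) (Rabs_pos D1) (Rabs_pos D2); intros.
  assert (HXY : X + Y <= (Rabs a + Rabs b + Rabs c + Rabs d) * k * (Rabs D1 + Rabs D2)) by nra.
  assert (HXY2 : (X + Y) <= / 8 * (Rabs D1 + Rabs D2) * Rabs det).
  { eapply Rle_trans. apply HXY.
    assert ((Rabs a + Rabs b + Rabs c + Rabs d) * k <= / 16 * Rabs det) by nra.
    nra. }
  replace (X * / Rabs det + Y * / Rabs det) with ((X + Y) / Rabs det) by (field; lra).
  apply Rle_div_l; lra.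
Qed.

Definition gmap (u v : R -> R -> R) (a b c d : R) (y x : pt) : pt :=
 (fst x - (d * (u (fst x) (snd x) - fst y) - b * (v (fst x) (snd x) - snd y)) / (a*d - b*c),
  snd x - (- c * (u (fst x) (snd x) - fst y) + a * (v (fst x) (snd x) - snd y)) / (a*d - b*c)).

Lemma contraction_step (u v : R -> R -> R) (a b c d k : R) (Box : R -> R -> Prop) :
  a * d - b * c <> 0 ->
  k * (16 * (Rabs a + Rabs b + Rabs c + Rabs d + 1)) <= Rabs (a * d - b * c) ->
  (forall x1 x2 x1' x2' t, Box x1 x2 -> Box x1' x2' -> Rmin x1' x1 <= t <= Rmax x1' x1 -> Box t x2) ->
  (forall x1 x2 x1' x2' t, Box x1 x2 -> Box x1' x2' -> Rmin x2' x2 <= t <= Rmax x2' x2 -> Box x1' t) ->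
  (forall x1 x2, Box x1 x2 ->
     differentiable_pt_lim u x1 x2 (dx u x1 x2) (dy u x1 x2) /\
     differentiable_pt_lim v x1 x2 (dx v x1 x2) (dy v x1 x2) /\
     Rabs (dx u x1 x2 - a) <= k /\ Rabs (dy u x1 x2 - b) <= k /\
     Rabs (dx v x1 x2 - c) <= k /\ Rabs (dy v x1 x2 - d) <= k) ->
  forall y x1 x2 x1' x2', Box x1 x2 -> Box x1' x2' ->
  edist (gmap u v a b c d y (x1, x2)) (gmap u v a b c d y (x1', x2')) <= / 4 * edist (x1, x2) (x1', x2').
Proof.
  intros Hdet Hk Hb1 Hb2 Hbox y x1 x2 x1' x2' B B'.
  destruct (mvt_seg (fun t => u t x2) (fun t => dx u t x2) x1' x1) as [xi1 [Hxi1 U1]].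
  { intros t ht. apply partial_x with (ly := dy u t x2). apply (Hbox _ _ (Hb1 _ _ _ _ _ B B' ht)). }
  destruct (mvt_seg (fun t => u x1' t) (fun t => dy u x1' t) x2' x2) as [ze1 [Hze1 U2]].
  { intros t ht. apply partial_y with (lx := dx u x1' t). apply (Hbox _ _ (Hb2 _ _ _ _ _ B B' ht)). }
  destruct (mvt_seg (fun t => v t x2) (fun t => dx v t x2) x1' x1) as [xi2 [Hxi2 V1]].
  { intros t ht. apply partial_x with (ly := dy v t x2). apply (Hbox _ _ (Hb1 _ _ _ _ _ B B' ht)). }
  destruct (mvt_seg (fun t => v x1' t) (fun t => dy v x1' t) x2' x2) as [ze2 [Hze2 V2]].
  { intros t ht. apply partial_y with (lx := dx v x1' t). apply (Hbox _ _ (Hb2 _ _ _ _ _ B B' ht)). }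
  simpl in U1, U2, V1, V2.
  destruct (Hbox _ _ (Hb1 _ _ _ _ _ B B' Hxi1)) as (_ & _ & E1 & _).
  destruct (Hbox _ _ (Hb2 _ _ _ _ _ B B' Hze1)) as (_ & _ & _ & E2 & _).
  destruct (Hbox _ _ (Hb1 _ _ _ _ _ B B' Hxi2)) as (_ & _ & _ & _ & E3 & _).
  destruct (Hbox _ _ (Hb2 _ _ _ _ _ B B' Hze2)) as (_ & _ & _ & _ & _ & E4).
  set (e1 := dx u xi1 x2 - a) in *. set (e2 := dy u x1' ze1 - b) in *.
  set (e3 := dx v xi2 x2 - c) in *. set (e4 := dy v x1' ze2 - d) in *.
  assert (EU : u x1 x2 - u x1' x2' = (a + e1) * (x1 - x1') + (b + e2) * (x2 - x2')).
  { unfold e1, e2. transitivity (dx u xi1 x2 * (x1 - x1') + dy u x1' ze1 * (x2 - x2')); [lra|ring]. }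
  assert (EV : v x1 x2 - v x1' x2' = (c + e3) * (x1 - x1') + (d + e4) * (x2 - x2')).
  { unfold e3, e4. transitivity (dx v xi2 x2 * (x1 - x1') + dy v x1' ze2 * (x2 - x2')); [lra|ring]. }
  eapply Rle_trans. apply edist_le_sum. unfold gmap; simpl.
  set (D1 := x1 - x1'). set (D2 := x2 - x2').
  replace (x1 - (d * (u x1 x2 - fst y) - b * (v x1 x2 - snd y)) / (a * d - b * c) -
      (x1' - (d * (u x1' x2' - fst y) - b * (v x1' x2' - snd y)) / (a * d - b * c)))
    with (D1 - (d * (u x1 x2 - u x1' x2') - b * (v x1 x2 - v x1' x2')) / (a * d - b * c))
    by (unfold D1; field; auto).
  replace (x2 - (- c * (u x1 x2 - fst y) + a * (v x1 x2 - snd y)) / (a * d - b * c) -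
      (x2' - (- c * (u x1' x2' - fst y) + a * (v x1' x2' - snd y)) / (a * d - b * c)))
    with (D2 - (- c * (u x1 x2 - u x1' x2') + a * (v x1 x2 - v x1' x2')) / (a * d - b * c))
    by (unfold D2; field; auto).
  rewrite EU, EV.
  eapply Rle_trans. apply contr_alg with (k := k); auto.
  generalize (edist_fst (x1, x2) (x1', x2')) (edist_snd (x1, x2) (x1', x2')); simpl.
  fold D1 D2. lra.
Qed.

Lemma contraction_fixed (g : pt -> pt) (q : pt) (rho : R) (Box : pt -> Prop) :
  (forall x, edist q x <= rho -> Box x) ->
  (forall x x', Box x -> Box x' -> edist (g x) (g x') <= / 4 * edist x x') ->
  4/3 * edist q (g q) <= rho ->
  exists l, edist q l <= rho /\ g l = l.
Proof.
  intros HB Hc Hr.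
  set (d0 := edist q (g q)) in *.
  assert (Hd0 : 0 <= d0) by apply edist_ge0.
  set (xs := fun n => nat_rect (fun _ => pt) q (fun _ x => g x) n).
  assert (Hxs : forall n, xs (S n) = g (xs n)) by reflexivity.
  assert (Hpow : forall n, 0 <= (/4) ^ n <= 1).
  { induction n. simpl; lra. simpl. nra. }
  assert (Inv : forall n, edist (xs n) (xs (S n)) <= (/4) ^ n * d0 /\
                  edist q (xs n) <= 4/3 * d0 * (1 - (/4) ^ n) /\
                  edist q (xs (S n)) <= 4/3 * d0 * (1 - (/4) ^ (S n))).
  { induction n.
    - simpl. rewrite edist_refl. fold d0. lra.
    - destruct IHn as (I1 & I2 & I3).
      assert (B1 : Box (xs n)).
      { apply HB. generalize (Hpow n); intro. nra. }
      assert (B2 : Box (xs (S n))).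
      { apply HB. generalize (Hpow (S n)); intro. nra. }
      assert (E : edist (xs (S n)) (xs (S (S n))) <= (/4) ^ (S n) * d0).
      { change (edist (g (xs n)) (g (xs (S n))) <= (/4) ^ (S n) * d0).
        eapply Rle_trans. apply (Hc _ _ B1 B2).
        change (g (xs n)) with (xs (S n)). simpl. rewrite Rmult_assoc. apply Rmult_le_compat_l; [lra|]. exact I1. }
      split; [auto|]. split; [auto|].
      eapply Rle_trans. apply (edist_triangle q (xs (S (S n))) (xs (S n))).
      generalize (Hpow (S n)); intro. simpl in *. nra. }
  set (r := fun n => 2 * d0 * (/4) ^ n).
  assert (Hr0 : forall n, 0 <= r n) by (intro n; unfold r; generalize (Hpow n); nra).
  assert (Hr1 : forall n, r (S n) <= r n / 4) by (intro n; unfold r; simpl; lra).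
  destruct (geom_limit xs r Hr0 Hr1) as [l Hl].
  { intro n. destruct (Inv n) as (I1 & _). unfold r. lra. }
  exists l.
  assert (Hq : edist q l <= 4/3 * d0).
  { specialize (Hl 0%nat). unfold r in Hl. simpl in Hl. lra. }
  split. lra.
  assert (Bl : Box l) by (apply HB; lra).
  assert (Hz : forall e, 0 < e -> edist l (g l) < e).
  { intros e He. destruct (r_small r Hr0 Hr1 e He) as [n Hn].
    assert (Bn : Box (xs n)).
    { apply HB. destruct (Inv n) as (_ & I2 & _). generalize (Hpow n); intro. nra. }
    eapply Rle_lt_trans. apply (edist_triangle l (g l) (xs (S n))).
    rewrite edist_sym. rewrite Hxs.
    generalize (Hc _ _ Bn Bl) (Hl (S n)) (Hl n) (Hr1 n); intros. rewrite <- Hxs in *. nra. }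
  symmetry. apply edist_eq0.
  generalize (edist_ge0 l (g l)); intro h.
  destruct (Rle_lt_or_eq_dec _ _ h) as [h'|h']; auto.
  specialize (Hz _ h'). lra.
Qed.

Lemma local_onto D u v q eta :
  is_open D -> C1_on D u -> C1_on D v -> D q -> jac u v q <> 0 -> 0 < eta ->
  exists s, 0 < s /\ forall y, eball (fmap u v q) s y ->
    exists x, eball q eta x /\ fmap u v x = y.
Proof.
  intros HD Cu Cv Hq Hj Heta.
  destruct q as [q1 q2]. unfold jac in Hj; simpl in Hj.
  set (a := dx u q1 q2) in *. set (b := dy u q1 q2) in *.
  set (c := dx v q1 q2) in *. set (d := dy v q1 q2) in *.
  assert (Hdet : a * d - b * c <> 0) by (intro h; apply Hj; lra).
  set (det := a * d - b * c) in *.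
  set (M := Rabs a + Rabs b + Rabs c + Rabs d).
  assert (HM : 0 <= M) by (unfold M; generalize (Rabs_pos a) (Rabs_pos b) (Rabs_pos c) (Rabs_pos d); lra).
  assert (Hdp : 0 < Rabs det) by (apply Rabs_pos_lt; auto).
  set (k := Rabs det / (16 * (M + 1))).
  assert (Hk : 0 < k) by (unfold k; apply Rdiv_lt_0_compat; lra).
  assert (Hk' : k * (16 * (M + 1)) <= Rabs det) by (unfold k; right; field; lra).
  destruct (HD (q1, q2) Hq) as [rD [HrD HrD']].
  destruct (Cu q1 q2 Hq) as [_ [Cu1 Cu2]].
  destruct (Cv q1 q2 Hq) as [_ [Cv1 Cv2]].
  destruct (Cu1 (mkposreal k Hk)) as [d1 H1].
  destruct (Cu2 (mkposreal k Hk)) as [d2 H2].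
  destruct (Cv1 (mkposreal k Hk)) as [d3 H3].
  destruct (Cv2 (mkposreal k Hk)) as [d4 H4].
  simpl in H1, H2, H3, H4.
  set (rho := Rmin (Rmin (rD/4) (eta/2)) (Rmin (Rmin (d1/2) (d2/2)) (Rmin (d3/2) (d4/2)))).
  assert (Hrho : 0 < rho).
  { generalize (cond_pos d1) (cond_pos d2) (cond_pos d3) (cond_pos d4); intros.
    unfold rho; repeat apply Rmin_glb_lt; lra. }
  assert (R1 : rho <= rD / 4) by (unfold rho; eapply Rle_trans; apply Rmin_l).
  assert (R2 : rho <= eta / 2) by (unfold rho; eapply Rle_trans; [apply Rmin_l|apply Rmin_r]).
  assert (R3 : rho <= d1 / 2) by (unfold rho; eapply Rle_trans; [apply Rmin_r|]; eapply Rle_trans; apply Rmin_l).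
  assert (R4 : rho <= d2 / 2) by (unfold rho; eapply Rle_trans; [apply Rmin_r|]; eapply Rle_trans; [apply Rmin_l|apply Rmin_r]).
  assert (R5 : rho <= d3 / 2) by (unfold rho; eapply Rle_trans; [apply Rmin_r|]; eapply Rle_trans; [apply Rmin_r|apply Rmin_l]).
  assert (R6 : rho <= d4 / 2) by (unfold rho; eapply Rle_trans; [apply Rmin_r|]; eapply Rle_trans; [apply Rmin_r|apply Rmin_r]).
  generalize (cond_pos d1) (cond_pos d2) (cond_pos d3) (cond_pos d4); intros P1 P2 P3 P4.
  set (Box := fun x1 x2 => Rabs (x1 - q1) <= rho /\ Rabs (x2 - q2) <= rho).
  assert (HboxD : forall x1 x2, Box x1 x2 -> D (x1, x2)).
  { intros x1 x2 [h1 h2]. apply HrD'. unfold eball.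
    eapply Rle_lt_trans. apply edist_le_sum. simpl.
    rewrite (Rabs_minus_sym q1), (Rabs_minus_sym q2). lra. }
  assert (Hbox : forall x1 x2, Box x1 x2 ->
     differentiable_pt_lim u x1 x2 (dx u x1 x2) (dy u x1 x2) /\
     differentiable_pt_lim v x1 x2 (dx v x1 x2) (dy v x1 x2) /\
     Rabs (dx u x1 x2 - a) <= k /\ Rabs (dy u x1 x2 - b) <= k /\
     Rabs (dx v x1 x2 - c) <= k /\ Rabs (dy v x1 x2 - d) <= k).
  { intros x1 x2 B. generalize (HboxD _ _ B); intro Dx.
    destruct B as [h1 h2].
    destruct (Cu x1 x2 Dx) as [Du _]. destruct (Cv x1 x2 Dx) as [Dv _].
    split; auto. split; auto.
    split. apply Rlt_le, H1; lra. split. apply Rlt_le, H2; lra.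
    split. apply Rlt_le, H3; lra. apply Rlt_le, H4; lra. }
  assert (Hb1 : forall x1 x2 x1' x2' t, Box x1 x2 -> Box x1' x2' -> Rmin x1' x1 <= t <= Rmax x1' x1 -> Box t x2).
  { intros x1 x2 x1' x2' t [h1 h2] [h1' h2'] ht. split; auto. eapply between_box; eauto. }
  assert (Hb2 : forall x1 x2 x1' x2' t, Box x1 x2 -> Box x1' x2' -> Rmin x2' x2 <= t <= Rmax x2' x2 -> Box x1' t).
  { intros x1 x2 x1' x2' t [h1 h2] [h1' h2'] ht. split; auto. eapply between_box; eauto. }
  set (s := rho * Rabs det / (2 * (M + 1))).
  exists s. split. { unfold s. apply Rdiv_lt_0_compat; nra. }
  intros y Hy. unfold eball in Hy.
  set (g := gmap u v a b c d y).
  destruct (contraction_fixed g (q1, q2) rho (fun x => Box (fst x) (snd x))) as [l [Hl1 Hl2]].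
  - intros [x1 x2] h. simpl. split.
    + rewrite Rabs_minus_sym. generalize (edist_fst (q1, q2) (x1, x2)); simpl; lra.
    + rewrite Rabs_minus_sym. generalize (edist_snd (q1, q2) (x1, x2)); simpl; lra.
  - intros [x1 x2] [x1' x2'] B B'. simpl in B, B'. unfold g.
    apply contraction_step with (k := k) (Box := Box); auto.
  - unfold g, gmap. simpl.
    set (P := u q1 q2 - fst y). set (Q := v q1 q2 - snd y).
    assert (HP : Rabs P < s).
    { unfold P. generalize (edist_fst (fmap u v (q1, q2)) y). simpl. lra. }
    assert (HQ : Rabs Q < s).
    { unfold Q. generalize (edist_snd (fmap u v (q1, q2)) y). simpl. lra. }
    eapply Rle_trans. apply Rmult_le_compat_l. lra. apply edist_le_sum. simpl. fold det.
    replace (q1 - (q1 - (d * P - b * Q) / det)) with ((d * P - b * Q) / det) by ring.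
    replace (q2 - (q2 - (- c * P + a * Q) / det)) with ((- c * P + a * Q) / det) by ring.
    unfold Rdiv. rewrite !Rabs_mult, Rabs_inv.
    assert (A1 : Rabs (d * P - b * Q) <= Rabs d * s + Rabs b * s).
    { unfold Rminus. eapply Rle_trans. apply Rabs_triang. rewrite Rabs_Ropp, !Rabs_mult.
      generalize (Rabs_pos d) (Rabs_pos b) (Rabs_pos P) (Rabs_pos Q); intros. nra. }
    assert (A2 : Rabs (- c * P + a * Q) <= Rabs c * s + Rabs a * s).
    { eapply Rle_trans. apply Rabs_triang. rewrite !Rabs_mult, Rabs_Ropp.
      generalize (Rabs_pos c) (Rabs_pos a) (Rabs_pos P) (Rabs_pos Q); intros. nra. }
    assert (A3 : M * s <= rho / 2 * Rabs det).
    { unfold s. replace (M * (rho * Rabs det / (2 * (M + 1)))) with (rho / 2 * Rabs det * (M / (M + 1))) by (field; lra).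
      assert (M / (M + 1) <= 1) by (apply Rle_div_l; lra).
      assert (0 <= rho / 2 * Rabs det) by nra. nra. }
    replace (Rabs (d * P - b * Q) * / Rabs det + Rabs (- c * P + a * Q) * / Rabs det)
      with ((Rabs (d * P - b * Q) + Rabs (- c * P + a * Q)) / Rabs det) by (field; lra).
    assert ((Rabs (d * P - b * Q) + Rabs (- c * P + a * Q)) / Rabs det <= rho / 2).
    { apply Rle_div_l. lra. unfold M in A3. nra. }
    lra.
  - exists l. split.
    + unfold eball. lra.
    + destruct l as [l1 l2]. unfold g, gmap in Hl2. simpl in Hl2.
      injection Hl2. intros E2 E1. fold det in E1, E2.
      set (P := u l1 l2 - fst y) in *. set (Q := v l1 l2 - snd y) in *.
      assert (F1 : d * P - b * Q = 0).
      { assert ((d * P - b * Q) / det = 0) by lra.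
        apply (Rmult_eq_reg_r (/ det)). rewrite Rmult_0_l. exact H. apply Rinv_neq_0_compat; auto. }
      assert (F2 : - c * P + a * Q = 0).
      { assert ((- c * P + a * Q) / det = 0) by lra.
        apply (Rmult_eq_reg_r (/ det)). rewrite Rmult_0_l. exact H. apply Rinv_neq_0_compat; auto. }
      assert (FP : P = 0).
      { apply (Rmult_eq_reg_l det); auto. unfold det. rewrite Rmult_0_r.
        replace ((a*d - b*c)*P) with (a*(d*P - b*Q) + b*(-c*P + a*Q)) by ring. rewrite F1, F2; ring. }
      assert (FQ : Q = 0).
      { apply (Rmult_eq_reg_l det); auto. unfold det. rewrite Rmult_0_r.
        replace ((a*d - b*c)*Q) with (c*(d*P - b*Q) + d*(-c*P + a*Q)) by ring. rewrite F1, F2; ring. }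
      unfold fmap. simpl. destruct y as [y1 y2]. unfold P, Q in *; simpl in *. f_equal; lra.
Qed.

Definition ball_ok (D : pt -> Prop) (b : pt * R) : Prop :=
  0 < snd b /\ forall x, edist (fst b) x <= snd b -> D x.

Definition disjb (b b' : pt * R) : Prop :=
  forall x, ~ (edist (fst b) x <= snd b /\ edist (fst b') x <= snd b').

Lemma distinct_preimages (D : pt -> Prop) (u v : R -> R -> R) (y : pt) (L : list (pt * R)) :
  List.Forall (fun b => ball_ok D b /\ exists x, eball (fst b) (snd b) x /\ fmap u v x = y) L ->
  ForallOrdPairs disjb L ->
  exists X, NoDup X /\ length X = length L /\
    forall x, In x X -> D x /\ fmap u v x = y /\ exists b, In b L /\ eball (fst b) (snd b) x.
Proof.
  induction L as [|b L IH]; intros HF HO.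
  - exists nil. split. constructor. split. auto. intros x [].
  - inversion HF as [|? ? [Hok [xb [Hxb Hfx]]] HF']; subst.
    inversion HO as [|? ? HO1 HO2]; subst.
    destruct (IH HF' HO2) as [X [HX1 [HX2 HX3]]].
    exists (xb :: X). split; [|split].
    + constructor; auto. intro hin. destruct (HX3 xb hin) as (_ & _ & b' & Hb' & Hxb').
      rewrite List.Forall_forall in HO1. apply (HO1 b' Hb' xb). unfold eball in *. lra.
    + simpl. auto.
    + intros x [<-|hin].
      * split. apply (proj2 Hok). unfold eball in Hxb. lra. split; auto. exists b. split; auto. left; auto.
      * destruct (HX3 x hin) as (h1 & h2 & b' & h3 & h4). split; auto. split; auto.
        exists b'. split; auto. right; auto.
Qed.

Lemma eventually_out_ball (D : pt -> Prop) (z : nat -> pt) (b : pt * R) :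
  is_open D -> ball_ok D b ->
  ((exists b0, boundary D b0 /\ seq_cv z b0) \/ seq_to_infty z) ->
  exists N, forall n, (N <= n)%nat -> snd b < edist (fst b) (z n).
Proof.
  intros HD [Hp Hin] [[b0 [[_ Hbd] Hcv]] | Hinf]; destruct b as [p rho]; simpl in *.
  - assert (Hlt : rho < edist p b0).
    { destruct (Rlt_or_le rho (edist p b0)) as [h|h]; auto.
      exfalso. apply Hbd. apply HD. apply Hin. auto. }
    destruct (Hcv (edist p b0 - rho) ltac:(lra)) as [N HN].
    exists N. intros n hn. specialize (HN n hn).
    generalize (edist_triangle p b0 (z n)). lra.
  - destruct (Hinf (enorm p + rho)) as [N HN]. exists N. intros n hn.
    specialize (HN n hn). rewrite !enorm_edist in *.
    generalize (edist_triangle (z n) (0,0) p). rewrite (edist_sym (z n) p). lra.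
Qed.

Lemma eventually_out (D : pt -> Prop) (z : nat -> pt) (L : list (pt * R)) :
  is_open D -> List.Forall (ball_ok D) L ->
  ((exists b0, boundary D b0 /\ seq_cv z b0) \/ seq_to_infty z) ->
  exists N, forall n, (N <= n)%nat -> forall b, In b L -> snd b < edist (fst b) (z n).
Proof.
  intros HD HF Hz. induction L as [|b L IH].
  - exists 0%nat. intros n _ b [].
  - inversion HF; subst. destruct (IH H2) as [N1 HN1].
    destruct (eventually_out_ball D z b HD H1 Hz) as [N2 HN2].
    exists (N1 + N2)%nat. intros n hn b' [<-|hin].
    + apply HN2; lia.
    + apply HN1; auto; lia.
Qed.

Lemma list_gap (z0 : pt) (L : list (pt * R)) :
  (forall b, In b L -> snd b < edist (fst b) z0) ->
  exists d, 0 < d /\ forall b, In b L -> d <= edist (fst b) z0 - snd b.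
Proof.
  induction L as [|b L IH]; intro H.
  - exists 1. split. lra. intros b [].
  - destruct IH as [d1 [Hd1 Hd1']]. { intros; apply H; right; auto. }
    assert (hb := H b (or_introl eq_refl)).
    exists (Rmin d1 (edist (fst b) z0 - snd b)). split.
    + apply Rmin_glb_lt; lra.
    + intros b' [<-|hin]. apply Rmin_r. eapply Rle_trans. apply Rmin_l. auto.
Qed.

Definition InvL D u v (w0 : pt) (e0 : R) (L : list (pt * R)) (c : pt) (r : R) : Prop :=
  0 < r /\ (forall y, eball c r y -> eball w0 e0 y) /\
  List.Forall (fun b => ball_ok D b /\ forall y, eball c r y ->
      exists x, eball (fst b) (snd b) x /\ fmap u v x = y) L /\
  ForallOrdPairs disjb L.

Lemma fmap_cont D u v z0 : D z0 -> C1_on D u -> C1_on D v ->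
  forall e, 0 < e -> exists d, 0 < d /\ forall x, edist z0 x < d -> edist (fmap u v z0) (fmap u v x) < e.
Proof.
  intros Hz Cu Cv e He. destruct z0 as [z1 z2].
  destruct (Cu z1 z2 Hz) as [Du _]. destruct (Cv z1 z2 Hz) as [Dv _].
  destruct (diff_cont _ _ _ _ _ Du (e/2) ltac:(lra)) as [d1 [Hd1 H1]].
  destruct (diff_cont _ _ _ _ _ Dv (e/2) ltac:(lra)) as [d2 [Hd2 H2]].
  exists (Rmin d1 d2). split. apply Rmin_glb_lt; auto.
  intros [x1 x2] hx.
  assert (h1 : Rabs (x1 - z1) < Rmin d1 d2).
  { rewrite Rabs_minus_sym. generalize (edist_fst (z1,z2) (x1,x2)); simpl; lra. }
  assert (h2 : Rabs (x2 - z2) < Rmin d1 d2).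
  { rewrite Rabs_minus_sym. generalize (edist_snd (z1,z2) (x1,x2)); simpl; lra. }
  generalize (Rmin_l d1 d2) (Rmin_r d1 d2); intros m1 m2.
  specialize (H1 x1 x2 ltac:(lra) ltac:(lra)). specialize (H2 x1 x2 ltac:(lra) ltac:(lra)).
  eapply Rle_lt_trans. apply edist_le_sum. unfold fmap; simpl.
  rewrite (Rabs_minus_sym (u z1 z2)), (Rabs_minus_sym (v z1 z2)). lra.
Qed.

Lemma step D u v w0 e0 L c r :
  is_open D -> C1_on D u -> C1_on D v -> nowhere_dense (crit D u v) ->
  (forall y, eball w0 e0 y -> cluster_set D u v y) ->
  InvL D u v w0 e0 L c r ->
  exists L' c' r', InvL D u v w0 e0 L' c' r' /\ length L' = S (length L) /\
    r' <= r / 4 /\ edist c c' < r / 2.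
Proof.
  intros HD Cu Cv Hnd Hcl [Hr [Hsub [HF HO]]].
  assert (Hc : cluster_set D u v c).
  { apply Hcl, Hsub. unfold eball. rewrite edist_refl. auto. }
  destruct Hc as [z [Hzin [Hzend Hzcv]]].
  assert (HFok : List.Forall (ball_ok D) L).
  { rewrite List.Forall_forall in *. intros b hb. apply (HF b hb). }
  destruct (eventually_out D z L HD HFok Hzend) as [N1 HN1].
  destruct (Hzcv (r/4) ltac:(lra)) as [N2 HN2].
  set (z0 := z (N1 + N2)%nat).
  assert (Hz0D : D z0) by apply Hzin.
  assert (Hz0c : edist (fmap u v z0) c < r / 4) by (apply HN2; lia).
  assert (Hz0out : forall b, In b L -> snd b < edist (fst b) z0) by (apply HN1; lia).
  destruct (HD z0 Hz0D) as [rD [HrD HrD']].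
  destruct (list_gap z0 L Hz0out) as [dg [Hdg Hdg']].
  destruct (fmap_cont D u v z0 Hz0D Cu Cv (r/4) ltac:(lra)) as [dc [Hdc Hdc']].
  set (delta := Rmin rD (Rmin (dg/2) dc)).
  assert (Hdelta : 0 < delta) by (unfold delta; repeat apply Rmin_glb_lt; lra).
  assert (Dl1 : delta <= rD) by apply Rmin_l.
  assert (Dl2 : delta <= dg / 2) by (unfold delta; eapply Rle_trans; [apply Rmin_r|apply Rmin_l]).
  assert (Dl3 : delta <= dc) by (unfold delta; eapply Rle_trans; [apply Rmin_r|apply Rmin_r]).
  assert (Hq : exists q, eball z0 delta q /\ ~ closure2 (crit D u v) q).
  { apply NNPP. intro hn. apply (Hnd z0). exists delta. split; auto.
    intros q hq. apply NNPP. intro hc. apply hn. exists q. auto. }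
  destruct Hq as [q [Hq1 Hq2]].
  assert (HqD : D q) by (apply HrD'; unfold eball in *; lra).
  assert (Hjq : jac u v q <> 0).
  { intro hj. apply Hq2. intros e he. exists q. split. split; auto.
    unfold eball. rewrite edist_refl. auto. }
  unfold eball in Hq1.
  set (eta := (delta - edist z0 q) / 2).
  assert (Heta : 0 < eta) by (unfold eta; lra).
  destruct (local_onto D u v q eta HD Cu Cv HqD Hjq Heta) as [s [Hs Hs']].
  assert (Hfq : edist (fmap u v z0) (fmap u v q) < r / 4) by (apply Hdc'; lra).
  assert (Hcc : edist c (fmap u v q) < r / 2).
  { generalize (edist_triangle c (fmap u v q) (fmap u v z0)). rewrite (edist_sym c (fmap u v z0)). lra. }
  set (r' := Rmin s (r / 4)).
  assert (Hr' : 0 < r') by (unfold r'; apply Rmin_glb_lt; lra).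
  assert (Hr'1 : r' <= s) by apply Rmin_l.
  assert (Hr'2 : r' <= r / 4) by apply Rmin_r.
  assert (Hsub' : forall y, eball (fmap u v q) r' y -> eball c r y).
  { intros y hy. unfold eball in *.
    generalize (edist_triangle c y (fmap u v q)). lra. }
  exists ((q, eta) :: L), (fmap u v q), r'.
  split; [|split; [simpl; auto|split; auto]].
  split; [auto|split; [|split]].
  - intros y hy. apply Hsub, Hsub', hy.
  - constructor.
    + split.
      * split. simpl. auto. simpl. intros x hx. apply HrD'. unfold eball.
        simpl in hx. unfold eta in *. generalize (edist_triangle z0 x q). lra.
      * simpl. intros y hy. apply Hs'. unfold eball in *. lra.
    + rewrite List.Forall_forall in *. intros b hb. destruct (HF b hb) as [h1 h2].
      split; auto.
  - constructor; auto.
    rewrite List.Forall_forall. intros b hb x [hx1 hx2]. simpl in hx1.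
    specialize (Hdg' b hb).
    unfold eta in *. generalize (edist_triangle z0 x q) (edist_triangle (fst b) z0 x). rewrite (edist_sym x z0).
    lra.
Qed.

Theorem theorem3p9 (D : pt -> Prop) (u v : R -> R -> R) :
  is_open D ->
  C1_on D u -> C1_on D v ->
  nowhere_dense (crit D u v) ->
  (exists w0, interior2 (cluster_set D u v) w0) ->
  forall w, interior2 (cluster_set D u v) w ->
  forall eps, 0 < eps ->
  exists w', eball w eps w' /\ interior2 (cluster_set D u v) w' /\
             val_infinite D u v w'.
Proof.
  intros HD Cu Cv Hnd _ w [rw [Hrw Hrw']] eps Heps.
  set (e0 := Rmin (rw / 2) eps).
  assert (He0 : 0 < e0) by (unfold e0; apply Rmin_glb_lt; lra).
  assert (He01 : e0 <= rw / 2) by apply Rmin_l.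
  assert (He02 : e0 <= eps) by apply Rmin_r.
  assert (Hint : forall y, eball w e0 y -> interior2 (cluster_set D u v) y).
  { intros y hy. exists (rw / 2). split. lra. intros q hq. apply Hrw'.
    unfold eball in *. generalize (edist_triangle w q y). lra. }
  assert (Hcl : forall y, eball w e0 y -> cluster_set D u v y).
  { intros y hy. apply Hrw'. unfold eball in *. lra. }
  set (St := { st : list (pt * R) * pt * R | InvL D u v w e0 (fst (fst st)) (snd (fst st)) (snd st) }).
  assert (Hstep : forall st : St, exists st' : St,
     length (fst (fst (proj1_sig st'))) = S (length (fst (fst (proj1_sig st)))) /\
     snd (proj1_sig st') <= snd (proj1_sig st) / 4 /\
     edist (snd (fst (proj1_sig st))) (snd (fst (proj1_sig st'))) < snd (proj1_sig st) / 2).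
  { intros [[[L c] r] HI]. simpl in *.
    destruct (step D u v w e0 L c r HD Cu Cv Hnd Hcl HI) as (L' & c' & r' & HI' & h1 & h2 & h3).
    exists (exist _ (L', c', r') HI'). simpl. auto. }
  destruct (choice _ Hstep) as [F HF].
  assert (HI0 : InvL D u v w e0 nil w e0).
  { split; auto. split; auto. split; constructor. }
  set (st0 := exist _ (nil, w, e0) HI0 : St).
  set (sq := fun n => nat_rect (fun _ => St) st0 (fun _ s => F s) n).
  set (Lc := fun n => fst (fst (proj1_sig (sq n)))).
  set (cc := fun n => snd (fst (proj1_sig (sq n)))).
  set (rr := fun n => snd (proj1_sig (sq n))).
  assert (HInv : forall n, InvL D u v w e0 (Lc n) (cc n) (rr n)).
  { intro n. exact (proj2_sig (sq n)). }
  assert (Hlen : forall n, length (Lc n) = n).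
  { induction n. reflexivity. unfold Lc. simpl. rewrite (proj1 (HF (sq n))). f_equal. exact IHn. }
  assert (Hr0 : forall n, 0 <= rr n) by (intro n; destruct (HInv n) as [h _]; lra).
  assert (Hr1 : forall n, rr (S n) <= rr n / 4) by (intro n; apply (HF (sq n))).
  assert (Hc1 : forall n, edist (cc n) (cc (S n)) <= rr n / 2).
  { intro n. apply Rlt_le. apply (HF (sq n)). }
  destruct (geom_limit cc rr Hr0 Hr1 Hc1) as [l Hl].
  assert (Hin : forall n, eball (cc n) (rr n) l).
  { intro n. unfold eball. specialize (Hl n). destruct (HInv n) as [h _]. lra. }
  assert (Hw : eball w e0 l) by (apply (Hin 0%nat)).
  exists l. split; [|split].
  - unfold eball in *. lra.
  - apply Hint; auto.
  - intros [lst Hlst].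
    set (n := S (length lst)).
    destruct (HInv n) as (_ & _ & HF' & HO').
    destruct (distinct_preimages D u v l (Lc n)) as [X [HX1 [HX2 HX3]]]; auto.
    { rewrite List.Forall_forall in *. intros b hb. destruct (HF' b hb) as [h1 h2].
      split; auto. }
    assert (Hincl : incl X lst).
    { intros x hx. destruct (HX3 x hx) as (h1 & h2 & _). apply Hlst; auto. }
    generalize (NoDup_incl_length HX1 Hincl). rewrite HX2, Hlen. unfold n. lia.
Qed.
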